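(* For every even integer $k\geq 4$, $$\nu_2\!\left((-1)^{k/2} + \binom{k}{k/2-1}\right) = \begin{cases} 1 & \text{if } k+2 = 2^{\ell} \text{ for some integer } \ell \geq 3,\\ 0 & \text{otherwise.}\end{cases}$$
   Context: For a prime $p$ and nonzero integer $m$, $\nu_p(m)$ denotes the exponent of the highest power of $p$ dividing $m$; this is extended to $\mathbb{Q}$ by $\nu_p(a/b)=\nu_p(a)-\nu_p(b)$ and $\nu_p(0)=\infty$. *)

(* Defs.v *)
From mathcomp Require Import all_boot all_order all_algebra.
Set Implicit Arguments. Unset Strict Implicit. Unset Printing Implicit Defensive.
Import GRing.Theory Num.Theory.

(* p-adic valuation of a NONZERO integer m: exponent of the highest power of
   p dividing m.  (For m = 0 the paper sets nu_p(0) = infinity; this function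
   returns 0 there, but it is only applied to nonzero integers below.) *)
Definition nu (p : nat) (m : int) : nat := logn p `|m|%N.

(* Main.v *)
Require Import Defs.
From mathcomp Require Import all_boot all_order all_algebra.
From mathcomp Require Import zify.
From Stdlib Require Import Classical.
Import GRing.Theory Num.Theory.
Lemma L n e j : (e <= n)%N -> (0 < j)%N -> (j < 2 ^ (n - e).+1)%N -> (2^e %| 'C(2^n, j))%N.
Proof.
move=> en j0 jlt.
case: e en jlt => [|e] en jlt; first by rewrite expn0 dvd1n.
have jn : (j <= 2 ^ n)%N.
  apply: leq_trans (ltnW jlt) _; rewrite leq_exp2l //; lia.
have Cpos : (0 < 'C(2^n, j))%N by rewrite bin_gt0.
have H : (j * 'C(2^n, j) = 2^n * 'C((2^n).-1, j.-1))%N.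
  by rewrite mul_bin_diag prednK.
have h1 : (n <= logn 2 (j * 'C(2^n, j)))%N.
  by rewrite -pfactor_dvdn // ?muln_gt0 ?j0 ?Cpos // H dvdn_mulr.
rewrite lognM // in h1.
have h2 : (logn 2 j < (n - e.+1).+1)%N.
  rewrite -(ltn_exp2l _ _ (isT : (1 < 2)%N)).
  apply: leq_ltn_trans jlt; apply: dvdn_leq => //; exact: pfactor_dvdnn.
rewrite pfactor_dvdn //; lia.
Qed.

Lemma P i n' K : (n' < K)%N -> (K < 2^i)%N -> (2 %| 'C(2^i + n', K))%N.
Proof.
move=> h1 h2; rewrite -binomial.Vandermonde; apply: dvdn_sum => -[j /= hj] _.
case: j hj => [|j] hj.
  by rewrite subn0 (bin_small h1) muln0 dvdn0.

apply: dvdn_mulr.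
case: i h2 => [|i] h2; first by rewrite expn0 in h2; lia.
have := L i.+1 1 j.+1; rewrite expn1; apply => //.
rewrite subn1 /=; lia.
Qed.

Lemma M1 n r : (2 <= n)%N -> (r < 2^(n-1))%N ->
  ('C((2^n).-1, r) %% 4 = if odd r then 3 else 1)%N.
Proof.
move=> n2; elim: r => [|r IH] hr; first by rewrite bin0.
have h4 : (4 %| 'C(2^n, r.+1))%N.
  have := L n 2 r.+1; rewrite (_ : 2 ^ 2 = 4)%N //; apply => //.
  by rewrite (_ : (n - 2).+1 = n - 1)%N //; lia.
have e : 'C(2^n, r.+1) = ('C((2^n).-1, r.+1) + 'C((2^n).-1, r))%N.
  by rewrite -binS prednK // expn_gt0.
have := IH (ltnW hr); move: h4; rewrite e /=; case: (odd r) => /=; lia.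
Qed.

Lemma M2 n r : (2 <= n)%N -> (r < 2^(n-1))%N ->
  ('C((2^n).-2, r) %% 4 = (if odd r then 3 * (r + 1) else r + 1) %% 4)%N.
Proof.
move=> n2; elim: r => [|r IH] hr; first by rewrite bin0.
have h2 : (2 < 2 ^ n)%N.
  apply: leq_trans (_ : 2 ^ 2 <= 2 ^ n)%N => //; by rewrite leq_exp2l.
have e : 'C((2^n).-1, r.+1) = ('C((2^n).-2, r.+1) + 'C((2^n).-2, r))%N.
  rewrite -binS; congr 'C(_, _); lia.
have := IH (ltnW hr); have := @M1 n r.+1 n2 hr; rewrite e /=; case: (odd r) => /=; lia.
Qed.

Local Open Scope ring_scope.
Lemma logn4 y : (y %% 4 = 2)%N -> logn 2 y = 1%N.
Proof.
move=> hy; have y0 : (0 < y)%N by lia.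
have h1 : (2 ^ 1 %| y)%N by rewrite expn1; lia.
have h2 : ~~ (2 ^ 2 %| y)%N by rewrite (_ : 2 ^ 2 = 4)%N //; lia.
rewrite pfactor_dvdn // in h1; rewrite pfactor_dvdn // in h2; lia.
Qed.

Lemma logn_odd y : odd y -> logn 2 y = 0%N.
Proof.
move=> hy; have y0 : (0 < y)%N by lia.
have h1 : ~~ (2 ^ 1 %| y)%N by rewrite expn1; lia.
rewrite pfactor_dvdn // in h1; lia.
Qed.

Lemma xform (m C : nat) : (0 < C)%N ->
  (-1) ^+ m + C%:Z = (if odd m then (C - 1)%N else (C + 1)%N)%:Z.
Proof.
move=> C0; rewrite -signr_odd; case: (odd m) => /=; lia.
Qed.

Theorem lemma3p1 (k : nat) (hk4 : (4 <= k)%N) (hkeven : ~~ odd k) :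
  let x : int := (-1) ^+ (k %/ 2) + ('C(k, (k %/ 2).-1))%:Z in
  x != 0 /\
  ((exists l : nat, (3 <= l)%N /\ (k + 2 = 2 ^ l)%N) -> nu 2 x = 1%N) /\
  (~ (exists l : nat, (3 <= l)%N /\ (k + 2 = 2 ^ l)%N) -> nu 2 x = 0%N).
Proof.
move=> x.
set m := (k %/ 2)%N.
have km : k = (2 * m)%N by rewrite /m; lia.
set C := 'C(k, m.-1).
have C0 : (0 < C)%N by rewrite bin_gt0; lia.
have xE : x = (if odd m then (C - 1)%N else (C + 1)%N)%:Z by rewrite /x xform.
rewrite /nu xE absz_nat.
case: (classic (exists l : nat, (3 <= l)%N /\ (k + 2 = 2 ^ l)%N)) => [[l [l3 hl]] | nE].
  set a := (2 ^ (l - 3))%N.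
  have e1 : (2 ^ (l - 1) = 4 * a)%N.
    by rewrite /a -(expnD 2 2) ; congr (2 ^ _)%N; lia.
  have e2 : (2 ^ l = 8 * a)%N.
    by rewrite /a -(expnD 2 3) ; congr (2 ^ _)%N; lia.
  have a0 : (0 < a)%N by rewrite /a expn_gt0.
  have mo : odd m.
    have -> : m = (4 * a - 1)%N by lia.
    rewrite oddB; last lia. by rewrite oddM.
  have hC := @M2 l m.-1 (ltnW l3) ltac:(lia).
  have ek : ((2 ^ l).-2 = k)%N by lia.
  rewrite ek in hC.
  have ev : odd m.-1 = false.
    have -> : m.-1 = (2 * (2 * a - 1))%N by lia.
    by rewrite oddM.
  rewrite ev in hC; rewrite -/C in hC.
  have hC3 : (C %% 4 = 3)%N by rewrite hC; lia.
  rewrite mo; split; first by apply/eqP; lia.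
  split=> [_|nE]; [apply: logn4; lia | by case: nE; exists l].
set t := trunc_log 2 (m + 1).
have h1 : (2 ^ t <= m + 1)%N by apply: trunc_logP => //; lia.
have h2 : (m + 1 < 2 ^ t.+1)%N by apply: trunc_log_ltn.
set b := (2 ^ t)%N.
have eb : (2 ^ t.+1 = 2 * b)%N by rewrite expnS.
rewrite eb in h2.
have nb : b <> (m + 1)%N.
  move=> hb; apply: nE; exists t.+1; split; last by rewrite eb; lia.
  rewrite -(ltn_exp2l _ _ (isT : (1 < 2)%N)) eb (_ : 2 ^ 2 = 4)%N //; lia.
have hP := @P t.+1 (k - 2 * b) m.-1 ltac:(lia) ltac:(lia).
rewrite eb in hP.
have ek : (2 * b + (k - 2 * b) = k)%N by lia.
rewrite ek -/C in hP.
have ho : odd (if odd m then (C - 1)%N else (C + 1)%N).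
  case: (odd m); rewrite ?oddB ?oddD /= ?(dvdn2 _) //; move: hP; rewrite dvdn2 => /negbTE ->; lia.
split; first by apply/eqP => -[h]; rewrite h in ho.
split=> [[l [l3 hl]] | _]; first by case: nE; exists l.
exact: logn_odd.
Qed.
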